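(* Let $w_0,w_1$ be finite words in the alphabet $\{0,1\}$ which both start with $10$. Then $R(w_0\cdot w_1)=R(w_0)\cdot R(w_1)$, where $\cdot$ denotes concatenation.
   Context: For $k\ge1$ set $\sigma(0^k)=0^k$, $\sigma(1^{2k})=(12)^k$, $\sigma(1^{2k-1})=2(12)^{k-1}$. Let $\Sigma_1\subseteq\{0,1\}^{\mathbb{N}}$ be the set of sequences that are eventually constantly $1$. The recoding map $R:\{0,1\}^{\mathbb{N}}\setminus\Sigma_1\to\{0,1,2\}^{\mathbb{N}}$ is defined by writing $\mathbf{a}=1^{a_0}0^{a_1}1^{a_2}0^{a_3}\cdots$ with $a_0\ge0$ and $a_i\ge1$ for $i\ge1$ (maximal blocks) and setting $R(\mathbf{a})=\sigma(1^{a_0})\sigma(0^{a_1})\sigma(1^{a_2})\sigma(0^{a_3})\cdots$ (with $\sigma(1^0)$ the empty word). For a finite word $w=a_1\cdots a_m\in\{0,1\}^m$ with $w\ne1^m$, write $R(w^\infty)=b_1b_2\cdots$ and define $R(w):=b_1\cdots b_m$. *)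

(* Defs.v *)
From Stdlib Require Import ClassicalEpsilon.
From mathcomp Require Import all_boot.

Set Implicit Arguments.
Unset Strict Implicit.
Unset Printing Implicit Defensive.

(* Binary letters are booleans: true = 1, false = 0.
   Output letters {0,1,2} are natural numbers 0,1,2. *)

Definition sigma1 (L : nat) : seq nat :=
  if odd L then 2 :: flatten (nseq L./2 [:: 1; 2])
  else flatten (nseq L./2 [:: 1; 2]).
Definition sigma0 (k : nat) : seq nat := nseq k 0.

Fixpoint run_start (a : nat -> bool) (i : nat) : nat :=
  match i with
  | 0 => 0
  | i'.+1 => if a i' == a i then run_start a i' else i
  end.

(* For a not eventually constantly 1: the least j >= i with a j = 0,
   i.e. one past the end of the block of 1s containing i (when a i = 1). *)
Definition run_end1 (a : nat -> bool) (i : nat) : nat :=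
  epsilon (inhabits 0%N)
    (fun j => (i <= j)%N /\ a j = false /\
              (forall k, (i <= k)%N -> (k < j)%N -> a k = true)).

(* The recoding map R on infinite binary sequences (not eventually 1):
   R(a) = sigma(1^a0) sigma(0^a1) sigma(1^a2) ...  Since sigma is length
   preserving, the letter of R(a) at position i is the letter at offset
   (i - s) of sigma(block), where s is the start of the maximal block
   containing i. *)
Definition Rinf (a : nat -> bool) (i : nat) : nat :=
  if a i then nth 0 (sigma1 (run_end1 a i - run_start a i)) (i - run_start a i)
  else nth 0 (sigma0 (i.+1 - run_start a i)) (i - run_start a i).

Definition wpow (w : seq bool) : nat -> bool :=
  fun i => nth false w (i %% size w).

(* R(w) for a finite word w <> 1^m : the first |w| letters of R(w^infinity).
   (Unspecified, here [::], when w = 1^m.) *)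
Definition Rw (w : seq bool) : seq nat :=
  if all id w then [::] else mkseq (Rinf (wpow w)) (size w).

(* Main.v *)
Require Import Defs.
From mathcomp Require Import all_boot.
From Stdlib Require Import ClassicalEpsilon.
From mathcomp Require Import zify.
Set Implicit Arguments.
Unset Strict Implicit.

Definition espec (a : nat -> bool) i j :=
  (i <= j)%N /\ a j = false /\ (forall k, (i <= k)%N -> (k < j)%N -> a k = true).

Lemma espec_uniq a i j1 j2 : espec a i j1 -> espec a i j2 -> j1 = j2.
Proof.
move=> [h1 [f1 t1]] [h2 [f2 t2]].
case: (ltngtP j1 j2) => // h.
- by move: (t2 j1 h1 h); rewrite f1.
- by move: (t1 j2 h2 h); rewrite f2.
Qed.

Lemma run_end1_spec a i j : espec a i j -> run_end1 a i = j.
Proof.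
move=> H.
have H' := (epsilon_spec (inhabits 0%N) (fun j => (i <= j)%N /\ a j = false /\
              (forall k, (i <= k)%N -> (k < j)%N -> a k = true)) (ex_intro _ j H)).
rewrite /run_end1.
exact: (@espec_uniq a i _ _ H' H).
Qed.

Lemma espec_ex a i N : (i <= N)%N -> a N = false -> exists j, (j <= N)%N /\ espec a i j.
Proof.
move=> iN aN.
have HP : exists j, (fun j => (i <= j) && ~~ a j) j by exists N; rewrite iN aN.
case: (ex_minnP HP) => j /andP[ij aj] minj.
exists j; split; first by apply: minj; rewrite iN aN.
split=> //; split; first by apply/negbTE.
move=> k ik kj; case ak: (a k) => //.
by have := minj k; rewrite ik ak => /(_ isT); rewrite leqNgt kj.
Qed.

Lemma end_shift a b n i N : (i <= N)%N -> b N = false ->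
  (forall k, (i <= k)%N -> (k <= N)%N -> a (n + k) = b k) ->
  run_end1 a (n + i) = n + run_end1 b i.
Proof.
move=> iN bN H.
case: (espec_ex iN bN) => j [jN [ij [bj tj]]].
rewrite (run_end1_spec (conj ij (conj bj tj))).
apply: run_end1_spec; split; first by rewrite leq_add2l.
split; first by rewrite H //.
move=> k ik kj.
have -> : k = n + (k - n) by lia.
rewrite H; [apply: tj|..]; lia.
Qed.

Lemma start_shift a b n i : (forall k, (k <= i)%N -> a (n + k) = b k) ->
  ((0 < n)%N -> a n.-1 != a n) -> run_start a (n + i) = n + run_start b i.
Proof.
elim: i => [|i IH] H Hn.
  rewrite addn0 /=; case: n Hn {H} => [|m] Hn //=.
  by rewrite (negbTE (Hn isT)).
rewrite addnS /= -addnS !H // IH //; last by move=> k kl; apply: H; lia.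
by case: (b i == b i.+1).
Qed.

Lemma run_start_le a i : (run_start a i <= i)%N.
Proof.
elim: i => [|i IH] //=; case: (a i == a i.+1) => //; exact: leqW.
Qed.

Lemma RinfE a i : Rinf a i =
  if a i then nth 0 (sigma1 (run_end1 a i - run_start a i)) (i - run_start a i) else 0.
Proof.
rewrite /Rinf; case: (a i) => //; rewrite /sigma0 nth_nseq; by case: ifP.
Qed.

Lemma flatten_nseqS (h : nat) (x : seq nat) : x ++ flatten (nseq h x) = flatten (nseq h x) ++ x.
Proof. elim: h => [|h IH] /=; first by rewrite cats0. by rewrite -catA -IH. Qed.

Lemma sigma1SS L : sigma1 L.+2 = sigma1 L ++ [:: 1; 2].
Proof.
rewrite /sigma1 /= negbK; case: (odd L) => /=.
- by rewrite -(flatten_nseqS _ [:: 1; 2]).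
- by rewrite -(flatten_nseqS _ [:: 1; 2]).
Qed.

Lemma size_sigma1 L : size (sigma1 L) = L.
Proof.
elim: L {-2}L (leqnn L) => [|m IH] [|[|L]] //= hL.
rewrite sigma1SS size_cat IH /=; lia.
Qed.

Lemma sigma1_last m : nth 0 (sigma1 m.+1) m = 2.
Proof.
elim: m {-2}m (leqnn m) => [|m IH] [|[|L]] //= hL.
rewrite sigma1SS nth_cat size_sigma1 ltnNge leqnSn /= subSn // subnn //.
Qed.

Lemma part1 a b i N : (i <= N)%N -> b N = false ->
  (forall k, (k <= N)%N -> a k = b k) -> Rinf a i = Rinf b i.
Proof.
move=> iN bN H.
rewrite !RinfE H //; case: (b i) => //.
have Hs := @start_shift a b 0 i.
have He := @end_shift a b 0 i N.
rewrite !add0n in Hs He.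
rewrite Hs ?He //; first by move=> k _ kN; apply: H.
by move=> k ki; apply: H; lia.
Qed.

Lemma part2 a b n i N : (i <= N)%N -> b N = false ->
  (forall k, (k <= N)%N -> a (n + k) = b k) -> b 0 = true -> b 1 = false ->
  (1 <= N)%N -> Rinf a (n + i) = Rinf b i.
Proof.
move=> iN bN H b0 b1 N1.
case: i iN => [|j] iN.
  have an : a n = true by rewrite -[n]addn0 H.
  rewrite !RinfE addn0 an b0 /=.
  have -> : run_end1 b 0 = 1.
    apply: run_end1_spec; split=> //; split=> // k _; case: k => //.
  rewrite sub0n /=.
  have -> : run_end1 a n = n.+1.
    apply: run_end1_spec; split=> //; split; first by rewrite -addn1 H.
    move=> k nk kn; have -> : k = n + 0 by lia. by rewrite H.
  have := run_start_le a n => hs.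
  by rewrite subSn // sigma1_last.
rewrite !RinfE H //; case: (b j.+1) => //.
set c := fun k => b (1 + k).
have Hsa : run_start a (n.+1 + j) = n.+1 + run_start c j.
  apply: start_shift => [k kj|_]; first by rewrite /c addSnnS H //; lia.
  by rewrite /= -[n]addn0 -addnS !H // b0 b1.
have Hsb : run_start b (1 + j) = 1 + run_start c j.
  apply: start_shift => [k kj|_] //; by rewrite b0 b1.
have He := @end_shift a b n j.+1 N iN bN (fun k _ kN => H k kN).
have Hs : run_start a (n + j.+1) = n + run_start b j.+1.
  by rewrite -addSnnS Hsa -[j.+1]add1n Hsb addnA addn1.
by rewrite He Hs !subnDl.
Qed.

Lemma mkseq_add (f : nat -> nat) m n :
  mkseq f (m + n) = mkseq f m ++ mkseq (fun i => f (m + i)) n.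
Proof.
rewrite /mkseq iotaD map_cat add0n; congr (_ ++ _).
by rewrite -{1}[m]addn0 iotaDl -map_comp.
Qed.

Lemma wpow_small w k : (k < size w)%N -> wpow w k = nth false w k.
Proof. by move=> h; rewrite /wpow modn_small. Qed.

Lemma wpow_per w k : wpow w (size w + k) = wpow w k.
Proof. by rewrite /wpow modnDl. Qed.

Theorem lemma8p7 (w0 w1 : seq bool) :
  (exists u0, w0 = true :: false :: u0) ->
  (exists u1, w1 = true :: false :: u1) ->
  Rw (w0 ++ w1) = Rw w0 ++ Rw w1.
Proof.
move=> [u0 E0] [u1 E1].
have h0 : all id w0 = false by rewrite E0.
have h1 : all id w1 = false by rewrite E1.
have h01 : all id (w0 ++ w1) = false by rewrite E0.
rewrite /Rw h0 h1 h01 size_cat mkseq_add.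
have s0 : (2 <= size w0)%N by rewrite E0.
have s1 : (2 <= size w1)%N by rewrite E1.
set a := wpow (w0 ++ w1).
have first2 : forall r, (r < 2)%N -> nth false w0 r = nth false w1 r.
  by move=> [|[|r]] //; rewrite E0 E1.
congr (_ ++ _); rewrite /mkseq; apply/eq_in_map => i; rewrite mem_iota => /andP[_ Hi].
- apply: (@part1 _ _ i (size w0).+1); first by lia.
    by rewrite -addn1 wpow_per wpow_small // E0.
  move=> k kN.
  case: (ltnP k (size w0)) => kw.
    rewrite /a wpow_small ?size_cat; last by lia.
    by rewrite nth_cat kw wpow_small.
  have -> : k = size w0 + (k - size w0) by lia.
  rewrite wpow_per /a wpow_small ?size_cat; last by lia.
  rewrite nth_cat ltnNge leq_addr /= addKn wpow_small; last by lia.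
  by rewrite first2 //; lia.
- rewrite add0n in Hi.
  apply: (@part2 _ _ _ i (size w1).+1); first by lia.
  + by rewrite -addn1 wpow_per wpow_small // E1.
  + move=> k kN.
    case: (ltnP k (size w1)) => kw.
      rewrite /a wpow_small ?size_cat; last by lia.
      by rewrite nth_cat ltnNge leq_addr /= addKn wpow_small.
    have -> : k = size w1 + (k - size w1) by lia.
    rewrite /a addnA -size_cat !wpow_per wpow_small; last by rewrite size_cat; lia.
    rewrite wpow_small; last by lia.
    rewrite nth_cat (leq_trans _ s0); last by lia.
    by rewrite first2 //; lia.
  + by rewrite wpow_small // E1.
  + by rewrite wpow_small // E1.
  + by [].
Qed.
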